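(* Let $M=(S,\mathrm{Act},P)$ be an MDP, $T\subseteq S$, $\mathrm{opt}\in\{\min,\max\}$, and let $r_1,r_2\in\mathbb{N}_\infty^S$ with $r_1\le r_2$ (pointwise). Then $\tilde D^{\mathrm{opt}}(r_1)\le\tilde D^{\mathrm{opt}}(r_2)$.
   Context: An MDP is a tuple $M=(S,\mathrm{Act},P)$ with $S$ finite, $\mathrm{Act}$ finite, $P\colon S\times\mathrm{Act}\times S\to[0,1]$ with $\sum_{s'}P(s,a,s')\in\{0,1\}$; $\mathrm{Act}(s)=\{a\mid\sum_{s'}P(s,a,s')=1\}$ is nonempty for all $s$; $\mathrm{Post}(s,a)=\{s'\mid P(s,a,s')>0\}$. $\mathbb{N}_\infty=\mathbb{N}\cup\{\infty\}$ with $\infty+1=\infty$. The complementary distance operator $\tilde D^{\mathrm{opt}}\colon\mathbb{N}_\infty^S\to\mathbb{N}_\infty^S$ is $\tilde D^{\mathrm{opt}}(r)(s)=\infty$ for $s\in T$ and $\mathrm{opt}_{a\in\mathrm{Act}(s)}\big(\min_{s'\in\mathrm{Post}(s,a)}r(s')+[\exists u,v\in\mathrm{Post}(s,a)\colon r(u)\ne r(v)]\big)$ for $s\notin T$, where $[\varphi]$ is $1$ if $\varphi$ holds and $0$ otherwise. *)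

(* Defs.v *)
From HB Require Import structures.
From mathcomp Require Import all_boot all_order all_algebra.
Set Implicit Arguments. Unset Strict Implicit. Unset Printing Implicit Defensive.
Import Order.TTheory GRing.Theory Num.Theory.

(* N_infty = N ∪ {∞}, encoded as option nat with None = ∞. *)
Definition ninf := option nat.
Definition ninf_inf : ninf := None.

Definition ninf_le (x y : ninf) : bool :=
  match x, y with
  | _, None => true
  | None, Some _ => false
  | Some m, Some n => (m <= n)%N
  end.

Definition ninf_min (x y : ninf) : ninf :=
  match x, y with
  | None, _ => y
  | _, None => x
  | Some m, Some n => Some (minn m n)
  end.

Definition ninf_max (x y : ninf) : ninf :=
  match x, y with
  | None, _ => None
  | _, None => None
  | Some m, Some n => Some (maxn m n)
  end.

Definition ninf_addn (x : ninf) (k : nat) : ninf :=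
  match x with None => None | Some n => Some (n + k)%N end.

Inductive opt := Omin | Omax.
Definition opt_op (o : opt) : ninf -> ninf -> ninf :=
  match o with Omin => ninf_min | Omax => ninf_max end.
(* neutral elements (only used for empty ranges, which never occur since Act(s) ≠ ∅) *)
Definition opt_id (o : opt) : ninf :=
  match o with Omin => None | Omax => Some 0%N end.

Local Open Scope ring_scope.
Record mdp (R : realFieldType) (S A : finType) := MDP {
  P : S -> A -> S -> R;
  P_ge0 : forall s a s', 0 <= P s a s';
  P_le1 : forall s a s', P s a s' <= 1;
  P_sum01 : forall s a, (\sum_(s' : S) P s a s' = 0) \/ (\sum_(s' : S) P s a s' = 1);
  Act_nonempty : forall s, exists a, \sum_(s' : S) P s a s' = 1
}.

Section Ops.
Variables (R : realFieldType) (S A : finType) (M : mdp R S A).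

Definition Act (s : S) : {set A} := [set a | \sum_(s' : S) P M s a s' == 1].

Definition Post (s : S) (a : A) : {set S} := [set s' | 0 < P M s a s'].

Definition Dtilde (T : {set S}) (o : opt) (r : S -> ninf) (s : S) : ninf :=
  if s \in T then ninf_inf
  else \big[opt_op o / opt_id o]_(a in Act s)
         ninf_addn (\big[ninf_min / ninf_inf]_(s' in Post s a) r s')
                   [exists u in Post s a, exists v in Post s a, r u != r v].

End Ops.

(* Main.v *)
Require Import Defs.
From mathcomp Require Import all_boot all_order all_algebra.
From mathcomp Require Import zify.

Section Aux.
Variable (S : finType).

Lemma le_refl' x : ninf_le x x.
Proof. by case: x => //= n. Qed.

Lemma min_mono a b c d : ninf_le a b -> ninf_le c d -> ninf_le (ninf_min a c) (ninf_min b d).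
Proof.
case: a; case: b; case: c; case: d => //= *; rewrite ?leq_min ?geq_min;
  try (apply/andP; split); rewrite ?geq_min ?(H, H0) //; try lia.
all: try (apply/orP; by [left|right]).
Qed.

Lemma max_mono a b c d : ninf_le a b -> ninf_le c d -> ninf_le (ninf_max a c) (ninf_max b d).
Proof.
case: a; case: b; case: c; case: d => //= *; rewrite ?geq_max ?leq_max;
  try (apply/andP; split); try (apply/orP; by [left|right]).
Qed.

Lemma bigmin_le_seq (r : seq S) (P : pred S) (f : S -> ninf) x : x \in r -> P x ->
  ninf_le (\big[ninf_min/ninf_inf]_(y <- r | P y) f y) (f x).
Proof.
elim: r => [|y r IH] //= Hx Px; rewrite big_cons.
move: Hx; rewrite in_cons => /orP [/eqP <-|Hr].
  rewrite Px; case: (f x) => [n|] //=; case: (\big[_/_]_(_ <- _ | _) _) => //= m.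
  by rewrite geq_minl.
have := IH Hr Px; case: (P y) => //.
case: (f x) => [n|] //=; case: (\big[_/_]_(_ <- _ | _) _) => [m|] //=;
  case: (f y) => [k|] //=; rewrite geq_min => ->; by rewrite orbT.
Qed.

Lemma bigmin_le (X : {set S}) (f : S -> ninf) x : x \in X ->
  ninf_le (\big[ninf_min/ninf_inf]_(y in X) f y) (f x).
Proof. by move=> Hx; apply: bigmin_le_seq => //; rewrite mem_index_enum. Qed.

Lemma bigmin_attained (X : {set S}) (f : S -> ninf) :
  let m := \big[ninf_min/ninf_inf]_(y in X) f y in
  m = None \/ exists2 x, x \in X & m = f x.
Proof.
apply: (big_ind (fun m => m = None \/ exists2 x, x \in X & m = f x)).
- by left.
- move=> a b Ha Hb.
  case: a Ha => [n|] Ha; case: b Hb => [k|] Hb /=; try exact: Ha; try exact: Hb.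
  by case: (leqP n k) => _; [exact: Ha | exact: Hb].
- by move=> i Hi; right; exists i.
Qed.

Lemma key (X : {set S}) (f g : S -> ninf) :
  (forall s, ninf_le (f s) (g s)) ->
  ninf_le (ninf_addn (\big[ninf_min/ninf_inf]_(y in X) f y)
                     [exists u in X, exists v in X, f u != f v])
          (ninf_addn (\big[ninf_min/ninf_inf]_(y in X) g y)
                     [exists u in X, exists v in X, g u != g v]).
Proof.
move=> Hfg.
have Hm : ninf_le (\big[ninf_min/ninf_inf]_(y in X) f y) (\big[ninf_min/ninf_inf]_(y in X) g y).
  apply: (big_ind2 (fun a b => ninf_le a b)) => //; exact: min_mono.
case Eb2: [exists u in X, exists v in X, g u != g v].
  move: Hm; case: (\big[_/_]_(_ in X) f _) => [n|]; case: (\big[_/_]_(_ in X) g _) => [k|] //=.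
  by case: [exists _ in _, _] => /=; lia.
case Eb1: [exists u in X, exists v in X, f u != f v]; last first.
  move: Hm; case: (\big[_/_]_(_ in X) f _) => [n|]; case: (\big[_/_]_(_ in X) g _) => [k|] //=.
  by rewrite !addn0.
move/existsP: Eb1 => [u /andP [Hu /existsP [v /andP [Hv Huv]]]].
have Hc : forall x y, x \in X -> y \in X -> g x = g y.
  move=> x y Hx Hy; apply/eqP; apply/negPn/negP => Hne.
  move/negbT: Eb2 => /negP; apply; apply/existsP; exists x; rewrite Hx /=.
  by apply/existsP; exists y; rewrite Hy.
case: (bigmin_attained X g) => [-> |[x Hx ->]]; first by case: (\big[_/_]_(_ in X) f _).
case Egx: (g x) => [k|]; last by case: (\big[_/_]_(_ in X) f _).
have Hfu := Hfg u; have Hfv := Hfg v.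
rewrite (Hc u x) // Egx in Hfu; rewrite (Hc v x) // Egx in Hfv.
have Hmu := @bigmin_le X f u Hu; have Hmv := @bigmin_le X f v Hv.
move: Huv Hfu Hfv Hmu Hmv; case: (f u) => [ju|] //; case: (f v) => [jv|] //.
case: (\big[_/_]_(_ in X) f _) => [n|] //= Hne H1 H2 H3 H4.
have : ju != jv by apply: contra Hne => /eqP ->.
move=> /= ?; lia.
Qed.
End Aux.

Theorem lemma8 (R : realFieldType) (S A : finType) (M : mdp R S A)
  (T : {set S}) (o : opt) (r1 r2 : S -> ninf) :
  (forall s, ninf_le (r1 s) (r2 s)) ->
  forall s, ninf_le (Dtilde M T o r1 s) (Dtilde M T o r2 s).
Proof.
move=> H s; rewrite /Dtilde; case: (s \in T) => //.
apply: (big_ind2 (fun a b => ninf_le a b)).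
- by case: o.
- by case: o => /=; [exact: min_mono | exact: max_mono].
- by move=> a _; exact: key.
Qed.
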